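(* Let $n\geq 1$ be an integer, $p>1$ real, $q=pe^{2\pi i/n}$, and let $A\subset\mathbb R$ be a finite nonempty alphabet. Let $\Lambda_{n,p,A}=\{\sum_{j=1}^\infty x_jq^{-j}\mid x_j\in A\}$. For $h=1,\dots,n$ define $$\underline K(h)=\{k\in\{0,\dots,n-1\}\mid (k-h+1)\bmod n\leq \lfloor n/2\rfloor-1\},\qquad \overline K(h)=\{k\in\{0,\dots,n-1\}\mid (k-h+1)\bmod n\leq \lceil n/2\rceil-1\},$$ where $(k-h+1)\bmod n$ denotes the representative in $\{0,\dots,n-1\}$, and set $$\mathbf v_{2h-1}=\sum_{k\in\underline K(h)}q^k,\qquad \mathbf v_{2h}=\sum_{k\in\overline K(h)}q^k .$$ Then $$\mathrm{conv}(\Lambda_{n,p,A})=\frac{\max A-\min A}{p^n-1}\,\mathrm{conv}\{\mathbf v_h\mid h=1,\dots,2n\}+\frac{1}{p^n-1}\sum_{k=0}^{n-1}(\min A)\,q^k .$$ Moreover, if $n$ is even, then $$\mathrm{conv}(\Lambda_{n,p,A})=\frac{\max A-\min A}{p^n-1}\,\mathrm{conv}\{\mathbf v_{2h}\mid h=1,\dots,n\}+\frac{1}{p^n-1}\sum_{k=0}^{n-1}(\min A)\,q^k .$$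
   Context: For a set $Y\subset\mathbb C$, $c\in\mathbb R$ and $d\in\mathbb C$, $cY+d=\{cy+d\mid y\in Y\}$. $\mathrm{conv}$ denotes convex hull in $\mathbb C\cong\mathbb R^2$. *)

(* Defs.v *)
From Stdlib Require Import Reals ZArith List.
From Coquelicot Require Import Coquelicot.
Open Scope R_scope.

Definition Cexpi (theta : R) : C := (cos theta, sin theta).

Definition qbase (n : nat) (p : R) : C :=
  Cmult (RtoC p) (Cexpi (2 * PI / INR n)).

Definition lmax (A : list R) : R := fold_right Rmax (hd 0 A) A.
Definition lmin (A : list R) : R := fold_right Rmin (hd 0 A) A.

Definition Lambda (n : nat) (p : R) (A : list R) : C -> Prop :=
  fun z => exists x : nat -> R, (forall j, In (x j) A) /\
    is_series (V := C_R_NormedModule)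
      (fun j => Cmult (RtoC (x (S j))) (Cinv (Cpow (qbase n p) (S j)))) z.

Definition conv (S : C -> Prop) : C -> Prop :=
  fun z => exists l : list (R * C),
    (forall c, In c l -> 0 <= fst c /\ S (snd c)) /\
    fold_right Rplus 0 (map fst l) = 1 /\
    z = fold_right Cplus (RtoC 0) (map (fun c => Cmult (RtoC (fst c)) (snd c)) l).

Definition affimg (c : R) (Y : C -> Prop) (d : C) : C -> Prop :=
  fun z => exists y, Y y /\ z = Cplus (Cmult (RtoC c) y) d.

Fixpoint Csum (n : nat) (f : nat -> C) : C :=
  match n with O => RtoC 0 | S m => Cplus (Csum m f) (f m) end.

Definition inKlow (n h k : nat) : bool :=
  Z.leb (Z.modulo (Z.of_nat k - Z.of_nat h + 1) (Z.of_nat n))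
        (Z.div (Z.of_nat n) 2 - 1).
Definition inKup (n h k : nat) : bool :=
  Z.leb (Z.modulo (Z.of_nat k - Z.of_nat h + 1) (Z.of_nat n))
        (Z.div (Z.of_nat n + 1) 2 - 1).

Definition vodd (n : nat) (q : C) (h : nat) : C :=
  Csum n (fun k => if inKlow n h k then Cpow q k else RtoC 0).
Definition veven (n : nat) (q : C) (h : nat) : C :=
  Csum n (fun k => if inKup n h k then Cpow q k else RtoC 0).

Definition Vall (n : nat) (q : C) : C -> Prop :=
  fun z => exists h, (1 <= h <= n)%nat /\ (z = vodd n q h \/ z = veven n q h).
Definition Veven (n : nat) (q : C) : C -> Prop :=
  fun z => exists h, (1 <= h <= n)%nat /\ z = veven n q h.

(* Main.v *)
Require Import Defs.
From Stdlib Require Import Reals ZArith List Lia Lra.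
From Coquelicot Require Import Coquelicot.
Open Scope R_scope.

Lemma C_ext (a b : C) : fst a = fst b -> snd a = snd b -> a = b.
Proof. destruct a, b; simpl; intros; subst; reflexivity. Qed.

Definition cross (a b : C) : R := fst a * snd b - snd a * fst b.

Fixpoint Rsum (n : nat) (f : nat -> R) : R :=
  match n with O => 0 | S m => Rsum m f + f m end.

Lemma Csum_fst n f : fst (Csum n f) = Rsum n (fun k => fst (f k)).
Proof. induction n; simpl; [reflexivity|]. rewrite IHn; reflexivity. Qed.
Lemma Csum_snd n f : snd (Csum n f) = Rsum n (fun k => snd (f k)).
Proof. induction n; simpl; [reflexivity|]. rewrite IHn; reflexivity. Qed.

Lemma Rsum_ext n f g : (forall k, (k < n)%nat -> f k = g k) -> Rsum n f = Rsum n g.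
Proof. induction n; intros H; simpl; [reflexivity|].
  rewrite IHn by (intros; apply H; lia). rewrite H by lia. reflexivity. Qed.
Lemma Rsum_plus n f g : Rsum n (fun k => f k + g k) = Rsum n f + Rsum n g.
Proof. induction n; simpl; [ring|]. rewrite IHn; ring. Qed.
Lemma Rsum_scal n c f : Rsum n (fun k => c * f k) = c * Rsum n f.
Proof. induction n; simpl; [ring|]. rewrite IHn; ring. Qed.
Lemma Rsum_opp n f : Rsum n (fun k => - f k) = - Rsum n f.
Proof. induction n; simpl; [ring|]. rewrite IHn; ring. Qed.
Lemma Rsum_nonneg n f : (forall k, (k < n)%nat -> 0 <= f k) -> 0 <= Rsum n f.
Proof. induction n; intros H; simpl; [lra|].
  assert (0 <= Rsum n f) by (apply IHn; intros; apply H; lia).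
  assert (0 <= f n) by (apply H; lia). lra. Qed.
Lemma Rsum_pos n f j : (forall k, (k < n)%nat -> 0 <= f k) -> (j < n)%nat -> 0 < f j -> 0 < Rsum n f.
Proof. induction n; intros H Hj Hf; simpl; [lia|].
  destruct (Nat.eq_dec j n) as [->|Hne].
  - assert (0 <= Rsum n f) by (apply Rsum_nonneg; intros; apply H; lia). lra.
  - assert (0 < Rsum n f) by (apply IHn; [intros; apply H; lia | lia | auto]).
    assert (0 <= f n) by (apply H; lia). lra. Qed.
Lemma Rsum_single n f j : (j < n)%nat -> (forall k, (k < n)%nat -> k <> j -> f k = 0) -> Rsum n f = f j.
Proof. induction n; intros Hj H; simpl; [lia|].
  destruct (Nat.eq_dec j n) as [->|Hne].
  - rewrite (Rsum_ext n f (fun _ => 0)).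
    + clear. assert (Rsum n (fun _ => 0) = 0). { induction n; simpl; [reflexivity| rewrite IHn; ring]. } lra.
    + intros; apply H; lia.
  - rewrite IHn; [| lia | intros; apply H; lia]. rewrite (H n) by lia. ring. Qed.

Lemma Csum_ext n f g : (forall k, (k < n)%nat -> f k = g k) -> Csum n f = Csum n g.
Proof. intros H; apply C_ext; rewrite ?Csum_fst, ?Csum_snd; apply Rsum_ext; intros; rewrite H; auto. Qed.

Section Lin.
Variable n : nat.
Variable w : nat -> C.
Definition lin (a : nat -> R) : C := Csum n (fun j => Cmult (RtoC (a j)) (w j)).

Lemma lin_fst a : fst (lin a) = Rsum n (fun j => a j * fst (w j)).
Proof. unfold lin; rewrite Csum_fst; apply Rsum_ext; intros; simpl; ring. Qed.
Lemma lin_snd a : snd (lin a) = Rsum n (fun j => a j * snd (w j)).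
Proof. unfold lin; rewrite Csum_snd; apply Rsum_ext; intros; simpl; ring. Qed.

Lemma lin_ext a b : (forall j, (j < n)%nat -> a j = b j) -> lin a = lin b.
Proof. intros H; apply C_ext; rewrite ?lin_fst, ?lin_snd; apply Rsum_ext; intros; rewrite H; auto. Qed.

Lemma cross_lin_l a y : cross (lin a) y = Rsum n (fun j => a j * cross (w j) y).
Proof. unfold cross. rewrite lin_fst, lin_snd.
  rewrite (Rsum_ext n (fun j => a j * (fst (w j) * snd y - snd (w j) * fst y))
    (fun j => snd y * (a j * fst (w j)) + - (fst y * (a j * snd (w j))))) by (intros; ring).
  rewrite Rsum_plus, Rsum_opp, !Rsum_scal. ring. Qed.
Lemma cross_lin_r a y : cross y (lin a) = Rsum n (fun j => a j * cross y (w j)).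
Proof. unfold cross. rewrite lin_fst, lin_snd.
  rewrite (Rsum_ext n (fun j => a j * (fst y * snd (w j) - snd y * fst (w j)))
    (fun j => fst y * (a j * snd (w j)) + - (snd y * (a j * fst (w j))))) by (intros; ring).
  rewrite Rsum_plus, Rsum_opp, !Rsum_scal. ring. Qed.

Lemma lin_single k : (k < n)%nat -> lin (fun j => if Nat.eqb j k then 1 else 0) = w k.
Proof. intros Hk. apply C_ext; rewrite ?lin_fst, ?lin_snd;
  rewrite (Rsum_single _ _ k Hk); rewrite ?Nat.eqb_refl; try ring;
  intros j _ Hj; apply Nat.eqb_neq in Hj; rewrite Hj; ring. Qed.
End Lin.

Section Geo.
Variable n : nat.
Variable p : R.
Hypothesis Hn : (1 <= n)%nat.
Hypothesis Hp : 1 < p.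

Definition th := 2 * PI / INR n.
Definition w (j : nat) : C := Cpow (qbase n p) j.

Lemma INRn_pos : 0 < INR n.
Proof. apply lt_0_INR; lia. Qed.

Lemma w_comp j : w j = (p ^ j * cos (INR j * th), p ^ j * sin (INR j * th)).
Proof. unfold w. induction j.
  - simpl. rewrite Rmult_0_l, cos_0, sin_0. apply C_ext; simpl; ring.
  - simpl Cpow. rewrite IHj. unfold qbase, Cexpi. fold th. rewrite S_INR.
    replace ((INR j + 1) * th) with (INR j * th + th) by ring.
    rewrite cos_plus, sin_plus. apply C_ext; simpl; ring. Qed.

Lemma nth_eq : INR n * th = 2 * PI.
Proof. unfold th. field. apply Rgt_not_eq, INRn_pos. Qed.

Definition off (a j : nat) : nat := if (a <=? j)%nat then (j - a)%nat else (j + n - a)%nat.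

Lemma off_lt a j : (a <= n)%nat -> (j < n)%nat -> (off a j < n)%nat.
Proof. intros; unfold off; destruct (Nat.leb_spec a j); lia. Qed.

Lemma cr_sin j k : (j < n)%nat -> (k < n)%nat ->
  cross (w j) (w k) = p ^ j * p ^ k * sin (INR (off j k) * th).
Proof. intros Hj Hk. rewrite !w_comp. unfold cross; simpl.
  assert (E : sin (INR k * th - INR j * th) = sin (INR (off j k) * th)).
  { unfold off. destruct (Nat.leb_spec j k).
    - rewrite minus_INR by lia. f_equal; ring.
    - rewrite minus_INR by lia. rewrite plus_INR.
      replace ((INR k + INR n - INR j) * th) with ((INR k * th - INR j * th) + 2 * INR 1 * PI).
      + rewrite sin_period; reflexivity.
      + simpl INR. replace (2 * 1 * PI) with (INR n * th) by (rewrite nth_eq; ring). ring. }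
  rewrite <- E, sin_minus. ring. Qed.

Lemma th_frac r : INR r * th = PI * (2 * INR r / INR n).
Proof. unfold th. field. apply Rgt_not_eq, INRn_pos. Qed.

Lemma frac_le (a b : nat) : (a <= b)%nat -> INR a / INR n <= INR b / INR n.
Proof. intros. unfold Rdiv. apply Rmult_le_compat_r.
  left; apply Rinv_0_lt_compat, INRn_pos. apply le_INR; auto. Qed.
Lemma frac_lt (a b : nat) : (a < b)%nat -> INR a / INR n < INR b / INR n.
Proof. intros. unfold Rdiv. apply Rmult_lt_compat_r.
  apply Rinv_0_lt_compat, INRn_pos. apply lt_INR; auto. Qed.
Lemma frac_n : INR n / INR n = 1.
Proof. field. apply Rgt_not_eq, INRn_pos. Qed.

Lemma sin_ge r : (2 * r <= n)%nat -> 0 <= sin (INR r * th).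
Proof. intros H. rewrite th_frac. apply sin_ge_0.
  - apply Rmult_le_pos; [left; apply PI_RGT_0|].
    unfold Rdiv; apply Rmult_le_pos; [apply Rmult_le_pos; [lra| apply pos_INR]|left; apply Rinv_0_lt_compat, INRn_pos].
  - assert (2 * INR r / INR n <= 1).
    { rewrite <- frac_n. replace (2 * INR r) with (INR (2*r)) by (rewrite mult_INR; reflexivity).
      apply frac_le; auto. }
    pose proof PI_RGT_0. nra. Qed.

Lemma sin_gt r : (0 < r)%nat -> (2 * r < n)%nat -> 0 < sin (INR r * th).
Proof. intros H0 H. rewrite th_frac. apply sin_gt_0.
  - apply Rmult_lt_0_compat; [apply PI_RGT_0|].
    unfold Rdiv; apply Rmult_lt_0_compat; [apply Rmult_lt_0_compat; [lra| apply lt_0_INR; lia]|apply Rinv_0_lt_compat, INRn_pos].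
  - assert (2 * INR r / INR n < 1).
    { rewrite <- frac_n. replace (2 * INR r) with (INR (2*r)) by (rewrite mult_INR; reflexivity).
      apply frac_lt; auto. }
    pose proof PI_RGT_0. nra. Qed.

Lemma sin_le r : (r < n)%nat -> (r = 0%nat \/ (n <= 2 * r)%nat) -> sin (INR r * th) <= 0.
Proof. intros Hr [->|H].
  - simpl. rewrite Rmult_0_l, sin_0. lra.
  - rewrite th_frac. apply sin_le_0.
    + assert (1 <= 2 * INR r / INR n).
      { rewrite <- frac_n. replace (2 * INR r) with (INR (2*r)) by (rewrite mult_INR; reflexivity).
        apply frac_le; auto. }
      pose proof PI_RGT_0. nra.
    + assert (2 * INR r / INR n <= 2).
      { replace 2 with (INR (2*n) / INR n) at 2.
        - replace (2 * INR r) with (INR (2*r)) by (rewrite mult_INR; reflexivity).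
          apply frac_le; lia.
        - rewrite mult_INR. simpl. field. apply Rgt_not_eq, INRn_pos. }
      pose proof PI_RGT_0. nra. Qed.

Lemma ppos j : 0 < p ^ j.
Proof. apply pow_lt; lra. Qed.

Lemma cr_ge j k : (j < n)%nat -> (k < n)%nat -> (2 * off j k <= n)%nat -> 0 <= cross (w j) (w k).
Proof. intros. rewrite cr_sin by auto. apply Rmult_le_pos; [left; apply Rmult_lt_0_compat; apply ppos|].
  apply sin_ge; auto. Qed.
Lemma cr_gt j k : (j < n)%nat -> (k < n)%nat -> (0 < off j k)%nat -> (2 * off j k < n)%nat -> 0 < cross (w j) (w k).
Proof. intros. rewrite cr_sin by auto. apply Rmult_lt_0_compat; [apply Rmult_lt_0_compat; apply ppos|].
  apply sin_gt; auto. Qed.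
Lemma cr_le j k : (j < n)%nat -> (k < n)%nat -> (off j k = 0%nat \/ (n <= 2 * off j k)%nat) -> cross (w j) (w k) <= 0.
Proof. intros. rewrite cr_sin by auto.
  assert (sin (INR (off j k) * th) <= 0) by (apply sin_le; auto; apply off_lt; lia).
  assert (0 < p^j * p^k) by (apply Rmult_lt_0_compat; apply ppos). nra. Qed.

Lemma off_rel a j k : (a < n)%nat -> (j < n)%nat -> (k < n)%nat ->
  off j k = if (off a j <=? off a k)%nat then (off a k - off a j)%nat else (off a k + n - off a j)%nat.
Proof. intros. unfold off.
  destruct (Nat.leb_spec a j), (Nat.leb_spec a k), (Nat.leb_spec j k);
  match goal with |- context [Nat.leb ?x ?y] => destruct (Nat.leb_spec x y) end; lia. Qed.


Lemma sign_change (s : nat -> R) j M : (0 < M)%nat -> 0 <= s j -> s (j + M)%nat <= 0 ->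
  exists i, (j <= i < j + M)%nat /\ 0 <= s i /\ s (S i) <= 0.
Proof. intros HM H0 H1. induction M as [|M IH]; [lia|].
  destruct (Rle_lt_dec 0 (s (j + M)%nat)) as [Hpos|Hneg].
  - exists (j + M)%nat. split; [lia|]. split; auto. replace (S (j+M)) with (j + S M)%nat by lia. auto.
  - destruct M as [|M]. { rewrite Nat.add_0_r in Hneg. lra. }
    destruct IH as [i [Hi Hs]]; [lia| lra |]. exists i; split; [lia|auto]. Qed.

Definition crd (o a b : C) : R :=
  (fst a - fst o) * (snd b - snd o) - (snd a - snd o) * (fst b - fst o).

Lemma polygon (c z : C) (V : nat -> C) (N : nat) :
  (0 < N)%nat ->
  (forall i, (i < 2 * N)%nat -> 0 < crd c (V i) (V (S i))) ->
  (forall i, (i < 2 * N)%nat -> 0 <= crd (V i) (V (S i)) z) ->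
  fst (V N) - fst c = - (fst (V 0%nat) - fst c) ->
  snd (V N) - snd c = - (snd (V 0%nat) - snd c) ->
  V (2 * N)%nat = V 0%nat ->
  exists i a b, (i < 2 * N)%nat /\ 0 <= a /\ 0 <= b /\ a + b <= 1 /\
    fst z = fst c + a * (fst (V i) - fst c) + b * (fst (V (S i)) - fst c) /\
    snd z = snd c + a * (snd (V i) - snd c) + b * (snd (V (S i)) - snd c).
Proof.
  intros HN H2 H3 A1 A2 Hper.
  set (s := fun i => crd c (V i) z).
  assert (HsN : s N = - s 0%nat).
  { unfold s, crd. rewrite A1, A2. ring. }
  assert (Hs2 : s (2 * N)%nat = s 0%nat) by (unfold s; rewrite Hper; reflexivity).
  assert (Hex : exists i, (i < 2 * N)%nat /\ 0 <= s i /\ s (S i) <= 0).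
  { destruct (Rle_lt_dec 0 (s 0%nat)).
    - destruct (sign_change s 0 N) as [i [Hi Hs]]; auto. simpl; lra.
      exists i; split; [lia|auto].
    - destruct (sign_change s N N) as [i [Hi Hs]]; auto. lra.
      replace (N + N)%nat with (2 * N)%nat by lia. lra.
      exists i; split; [lia|auto]. }
  destruct Hex as [i [Hi [Hs1 Hs2']]].
  specialize (H2 i Hi). specialize (H3 i Hi). unfold s, crd in *.
  set (ax := fst (V i) - fst c) in *. set (ay := snd (V i) - snd c) in *.
  set (bx := fst (V (S i)) - fst c) in *. set (by' := snd (V (S i)) - snd c) in *.
  set (zx := fst z - fst c) in *. set (zy := snd z - snd c) in *.
  set (D := ax * by' - ay * bx) in *.
  assert (HD : D <> 0) by lra.
  exists i, ((zx * by' - zy * bx) / D), ((ax * zy - ay * zx) / D).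
  assert (E3 : (fst (V (S i)) - fst (V i)) * (snd z - snd (V i)) - (snd (V (S i)) - snd (V i)) * (fst z - fst (V i))
     = D - (zx * by' - zy * bx) - (ax * zy - ay * zx)) by (unfold D, ax, ay, bx, by', zx, zy; ring).
  rewrite E3 in H3.
  repeat split; auto.
  - unfold Rdiv; apply Rmult_le_pos; [lra | left; apply Rinv_0_lt_compat; lra].
  - unfold Rdiv; apply Rmult_le_pos; [lra | left; apply Rinv_0_lt_compat; lra].
  - replace ((zx * by' - zy * bx) / D + (ax * zy - ay * zx) / D) with (((zx * by' - zy * bx) + (ax * zy - ay * zx)) / D) by (field; auto).
    apply (Rmult_le_reg_r D); [lra|]. unfold Rdiv. rewrite Rmult_assoc, Rinv_l by auto. lra.
  - unfold D, ax, ay, bx, by', zx, zy in *. field. exact HD.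
  - unfold D, ax, ay, bx, by', zx, zy in *. field. exact HD.
Qed.

Definition wsum (l : list (R * C)) : R := fold_right Rplus 0 (map fst l).
Definition comb (l : list (R * C)) : C :=
  fold_right Cplus (RtoC 0) (map (fun c => Cmult (RtoC (fst c)) (snd c)) l).

Lemma conv_iff S z : conv S z <-> exists l, (forall c, In c l -> 0 <= fst c /\ S (snd c)) /\ wsum l = 1 /\ z = comb l.
Proof. reflexivity. Qed.

Definition scl (a : R) (l : list (R * C)) : list (R * C) := map (fun c => (a * fst c, snd c)) l.

Lemma wsum_app l1 l2 : wsum (l1 ++ l2) = wsum l1 + wsum l2.
Proof. induction l1; simpl; [unfold wsum; simpl; ring|]. unfold wsum in *; simpl. rewrite IHl1. ring. Qed.
Lemma comb_app l1 l2 : comb (l1 ++ l2) = Cplus (comb l1) (comb l2).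
Proof. induction l1; unfold comb in *; simpl.
  - apply C_ext; simpl; ring.
  - rewrite IHl1. apply C_ext; simpl; ring. Qed.
Lemma wsum_scl a l : wsum (scl a l) = a * wsum l.
Proof. induction l; unfold wsum, scl in *; simpl; [ring|]. rewrite IHl; ring. Qed.
Lemma comb_scl a l : comb (scl a l) = Cmult (RtoC a) (comb l).
Proof. induction l; unfold comb, scl in *; simpl.
  - apply C_ext; simpl; ring.
  - rewrite IHl. apply C_ext; simpl; ring. Qed.

Lemma conv_conv_gen (S : C -> Prop) l : (forall c, In c l -> 0 <= fst c /\ conv S (snd c)) ->
  exists l', (forall c, In c l' -> 0 <= fst c /\ S (snd c)) /\ wsum l' = wsum l /\ comb l' = comb l.
Proof. induction l as [|[a x] l IH]; intros H.
  - exists nil. split; [simpl; tauto| split; reflexivity].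
  - destruct IH as [l' [H1 [H2 H3]]]. { intros; apply H; simpl; auto. }
    destruct (H (a, x)) as [Ha [m [Hm1 [Hm2 Hm3]]]]; [simpl; auto|]. simpl in Ha, Hm3. change (wsum m = 1) in Hm2. change (x = comb m) in Hm3.
    exists (scl a m ++ l'). split; [|split].
    + intros c Hc. apply in_app_or in Hc as [Hc|Hc]; auto.
      unfold scl in Hc. apply in_map_iff in Hc as [c' [<- Hc']]. simpl.
      destruct (Hm1 c' Hc'). split; auto. apply Rmult_le_pos; auto.
    + rewrite wsum_app, wsum_scl, H2, Hm2. unfold wsum; simpl. ring.
    + rewrite comb_app, comb_scl, H3, <- Hm3. unfold comb; simpl. reflexivity.
Qed.

Lemma conv_conv (S : C -> Prop) l : (forall c, In c l -> 0 <= fst c /\ conv S (snd c)) -> wsum l = 1 ->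
  conv S (comb l).
Proof. intros H1 H2. destruct (conv_conv_gen S l H1) as [l' [A [B C']]].
  apply conv_iff. exists l'. split; auto. split; [congruence| auto]. Qed.

Lemma conv_of S x : S x -> conv S x.
Proof. intros H. apply conv_iff. exists ((1, x) :: nil). split; [|split].
  - intros c [<-|[]]; simpl; split; auto; lra.
  - unfold wsum; simpl; ring.
  - unfold comb; simpl. apply C_ext; simpl; ring. Qed.

Definition Lh := Nat.div2 n.
Lemma Lh_par : n = (2 * Lh)%nat \/ n = (2 * Lh + 1)%nat.
Proof. unfold Lh. destruct (Nat.Even_or_Odd n) as [[m Hm]|[m Hm]]; rewrite Hm.
  - rewrite Nat.div2_double. auto.
  - replace (2*m+1)%nat with (S (2*m)) by lia. rewrite Nat.div2_succ_double. lia. Qed.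

Definition chi (a len j : nat) : R := if (off a j <? len)%nat then 1 else 0.
Definition W := w.
Definition LIN := lin n W.
Lemma LIN_ext a b : (forall j, (j < n)%nat -> a j = b j) -> LIN a = LIN b.
Proof. apply lin_ext. Qed.
Definition Vv (i : nat) : C := LIN (chi (Nat.div2 i) (Lh + (i - 2 * Nat.div2 i))).
Definition cen : C := LIN (fun _ => / 2).

Definition addm (a r : nat) : nat := if (a + r <? n)%nat then (a + r)%nat else (a + r - n)%nat.
Lemma addm_lt a r : (a < n)%nat -> (r < n)%nat -> (addm a r < n)%nat.
Proof. intros; unfold addm; destruct (Nat.ltb_spec (a+r) n); lia. Qed.
Lemma off_addm a r : (a < n)%nat -> (r < n)%nat -> off a (addm a r) = r.
Proof. intros; unfold addm, off; destruct (Nat.ltb_spec (a+r) n); destruct (Nat.leb_spec a (a+r)); 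
  try destruct (Nat.leb_spec a (a+r-n)); lia. Qed.
Lemma off_inj a j k : (a < n)%nat -> (j < n)%nat -> (k < n)%nat -> off a j = off a k -> j = k.
Proof. intros; unfold off in *; destruct (Nat.leb_spec a j), (Nat.leb_spec a k); lia. Qed.
Lemma off_self a : off a a = 0%nat.
Proof. unfold off. rewrite Nat.leb_refl. lia. Qed.

Lemma lin_fst_minus a b : fst (LIN a) - fst (LIN b) = fst (LIN (fun j => a j - b j)).
Proof. unfold LIN. rewrite !lin_fst.
  rewrite (Rsum_ext n (fun j => (a j - b j) * fst (W j)) (fun j => a j * fst (W j) + - (b j * fst (W j)))) by (intros; ring).
  rewrite Rsum_plus, Rsum_opp; ring. Qed.
Lemma lin_snd_minus a b : snd (LIN a) - snd (LIN b) = snd (LIN (fun j => a j - b j)).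
Proof. unfold LIN. rewrite !lin_snd.
  rewrite (Rsum_ext n (fun j => (a j - b j) * snd (W j)) (fun j => a j * snd (W j) + - (b j * snd (W j)))) by (intros; ring).
  rewrite Rsum_plus, Rsum_opp; ring. Qed.

Lemma crd_lin g a b : crd (LIN g) (LIN a) (LIN b) = cross (LIN (fun j => a j - g j)) (LIN (fun j => b j - g j)).
Proof. unfold crd, cross. rewrite !lin_fst_minus, !lin_snd_minus. reflexivity. Qed.

Lemma lin_plus a b : LIN (fun j => a j + b j) = Cplus (LIN a) (LIN b).
Proof. unfold LIN. apply C_ext; simpl; rewrite ?lin_fst, ?lin_snd; rewrite <- Rsum_plus; apply Rsum_ext; intros; ring. Qed.
Lemma lin_opp a : LIN (fun j => - a j) = Copp (LIN a).
Proof. unfold LIN. apply C_ext; simpl; rewrite ?lin_fst, ?lin_snd; rewrite <- Rsum_opp; apply Rsum_ext; intros; ring. Qed.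
Lemma lin_delta k : (k < n)%nat -> LIN (fun j => if Nat.eqb j k then 1 else 0) = W k.
Proof. intros; unfold LIN; apply lin_single; auto. Qed.

Lemma cross_plus_self x y : cross x (Cplus x y) = cross x y.
Proof. unfold cross; simpl; ring. Qed.
Lemma cross_opp_r x y : cross x (Copp y) = - cross x y.
Proof. unfold cross; simpl; ring. Qed.
Lemma cross_opp_l x y : cross (Copp x) y = - cross x y.
Proof. unfold cross; simpl; ring. Qed.
Lemma cross_anti x y : cross x y = - cross y x.
Proof. unfold cross; ring. Qed.

Hypothesis Hn3 : (3 <= n)%nat.

Lemma Lh_ge1 : (1 <= Lh)%nat.
Proof. destruct Lh_par; lia. Qed.

Lemma step1_diff b j : (b < n)%nat -> (j < n)%nat ->
  chi b (Lh + 1) j - chi b Lh j = if Nat.eqb j (addm b Lh) then 1 else 0.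
Proof. intros Hb Hj. pose proof Lh_par as HP.
  assert (HL : (Lh < n)%nat) by lia.
  pose proof (off_addm b Lh Hb HL) as Hk. unfold chi.
  destruct (Nat.eqb_spec j (addm b Lh)) as [->|Hne].
  - rewrite Hk. destruct (Nat.ltb_spec Lh (Lh+1)), (Nat.ltb_spec Lh Lh); lia || lra.
  - assert (off b j <> Lh). { intros E. apply Hne. apply (off_inj b); auto. apply addm_lt; auto. congruence. }
    destruct (Nat.ltb_spec (off b j) (Lh+1)), (Nat.ltb_spec (off b j) Lh); try lra; lia. Qed.

Lemma step2_diff b j : (b < n)%nat -> (j < n)%nat ->
  chi (S b) Lh j - chi b (Lh + 1) j = - (if Nat.eqb j b then 1 else 0).
Proof. intros Hb Hj. pose proof Lh_par as HP. unfold chi.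
  destruct (Nat.eqb_spec j b) as [->|Hne].
  - rewrite off_self. unfold off. destruct (Nat.leb_spec (S b) b); [lia|].
    destruct (Nat.ltb_spec (b + n - S b) Lh); destruct (Nat.ltb_spec 0 (Lh+1)); try lia; lra.
  - unfold off. destruct (Nat.leb_spec (S b) j), (Nat.leb_spec b j); try lia;
    match goal with |- context [Nat.ltb ?x Lh] => destruct (Nat.ltb_spec x Lh) end;
    match goal with |- context [Nat.ltb ?x (Lh+1)] => destruct (Nat.ltb_spec x (Lh+1)) end; try lia; lra. Qed.

Lemma chi01 a len j : 0 <= chi a len j <= 1.
Proof. unfold chi; destruct (_ <? _)%nat; lra. Qed.

Lemma D1 b : (b < n)%nat -> 0 < Rsum n (fun j => (chi b Lh j - / 2) * cross (W j) (W (addm b Lh))).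
Proof. intros Hb. pose proof Lh_par as HP. pose proof Lh_ge1.
  assert (HL : (Lh < n)%nat) by lia. set (k := addm b Lh).
  assert (Hk : (k < n)%nat) by (apply addm_lt; auto).
  assert (Hok : off b k = Lh) by (apply off_addm; auto).
  apply (Rsum_pos _ _ (addm b (Lh - 1))).
  - intros j Hj. unfold W, chi.
    pose proof (off_lt b j ltac:(lia) Hj).
    destruct (Nat.ltb_spec (off b j) Lh).
    + assert (0 <= cross (w j) (w k)); [|lra].
      apply cr_ge; auto. rewrite (off_rel b j k) by auto. rewrite Hok.
      destruct (Nat.leb_spec (off b j) Lh); lia.
    + assert (cross (w j) (w k) <= 0); [|lra].
      apply cr_le; auto. rewrite (off_rel b j k) by auto. rewrite Hok.
      destruct (Nat.leb_spec (off b j) Lh); lia.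
  - apply addm_lt; lia.
  - set (j := addm b (Lh - 1)). assert (Hj : (j < n)%nat) by (apply addm_lt; lia).
    assert (Hoj : off b j = (Lh - 1)%nat) by (apply off_addm; lia).
    unfold chi, W. rewrite Hoj. destruct (Nat.ltb_spec (Lh - 1) Lh); [|lia].
    assert (0 < cross (w j) (w k)); [|lra].
    apply cr_gt; auto; rewrite (off_rel b j k) by auto; rewrite Hok, Hoj;
    destruct (Nat.leb_spec (Lh - 1) Lh); lia. Qed.

Lemma E1 b t : (b < n)%nat -> (forall j, (j < n)%nat -> 0 <= t j <= 1) ->
  0 <= Rsum n (fun j => (t j - chi b Lh j) * cross (W (addm b Lh)) (W j)).
Proof. intros Hb Ht. pose proof Lh_par as HP. pose proof Lh_ge1.
  assert (HL : (Lh < n)%nat) by lia. set (k := addm b Lh).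
  assert (Hk : (k < n)%nat) by (apply addm_lt; auto).
  assert (Hok : off b k = Lh) by (apply off_addm; auto).
  apply Rsum_nonneg. intros j Hj. specialize (Ht j Hj). unfold W, chi.
  pose proof (off_lt b j ltac:(lia) Hj).
  destruct (Nat.ltb_spec (off b j) Lh).
  - assert (cross (w k) (w j) <= 0); [|nra].
    apply cr_le; auto. rewrite (off_rel b k j) by auto. rewrite Hok.
    destruct (Nat.leb_spec Lh (off b j)); lia.
  - assert (0 <= cross (w k) (w j)); [|nra].
    apply cr_ge; auto. rewrite (off_rel b k j) by auto. rewrite Hok.
    destruct (Nat.leb_spec Lh (off b j)); lia. Qed.

Lemma D2 b : (b < n)%nat -> 0 < Rsum n (fun j => (chi b (Lh + 1) j - / 2) * cross (W b) (W j)).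
Proof. intros Hb. pose proof Lh_par as HP. pose proof Lh_ge1.
  apply (Rsum_pos _ _ (addm b 1)).
  - intros j Hj. unfold W, chi. pose proof (off_lt b j ltac:(lia) Hj).
    destruct (Nat.ltb_spec (off b j) (Lh + 1)).
    + assert (0 <= cross (w b) (w j)); [|lra]. apply cr_ge; auto; lia.
    + assert (cross (w b) (w j) <= 0); [|lra]. apply cr_le; auto; lia.
  - apply addm_lt; lia.
  - set (j := addm b 1). assert (Hj : (j < n)%nat) by (apply addm_lt; lia).
    assert (Hoj : off b j = 1%nat) by (apply off_addm; lia).
    unfold chi, W. rewrite Hoj. destruct (Nat.ltb_spec 1 (Lh+1)); [|lia].
    assert (0 < cross (w b) (w j)); [|lra]. apply cr_gt; auto; lia. Qed.

Lemma E2 b t : (b < n)%nat -> (forall j, (j < n)%nat -> 0 <= t j <= 1) ->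
  0 <= Rsum n (fun j => (t j - chi b (Lh + 1) j) * cross (W j) (W b)).
Proof. intros Hb Ht. pose proof Lh_par as HP. pose proof Lh_ge1.
  apply Rsum_nonneg. intros j Hj. specialize (Ht j Hj). unfold W, chi.
  pose proof (off_lt b j ltac:(lia) Hj).
  assert (Hr : off j b = if (off b j <=? 0)%nat then (0 - off b j)%nat else (0 + n - off b j)%nat).
  { rewrite (off_rel b j b) by auto. rewrite off_self. reflexivity. }
  destruct (Nat.ltb_spec (off b j) (Lh + 1)).
  - assert (cross (w j) (w b) <= 0); [|nra].
    apply cr_le; auto. rewrite Hr. destruct (Nat.leb_spec (off b j) 0); lia.
  - assert (0 <= cross (w j) (w b)); [|nra].
    apply cr_ge; auto. rewrite Hr. destruct (Nat.leb_spec (off b j) 0); lia. Qed.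

Lemma Vv_even b : Vv (2 * b) = LIN (chi b Lh).
Proof. unfold Vv. rewrite Nat.div2_double. replace (2 * b - 2 * b)%nat with 0%nat by lia.
  rewrite Nat.add_0_r. reflexivity. Qed.
Lemma Vv_odd b : Vv (S (2 * b)) = LIN (chi b (Lh + 1)).
Proof. unfold Vv. rewrite Nat.div2_succ_double. replace (S (2 * b) - 2 * b)%nat with 1%nat by lia.
  reflexivity. Qed.

Lemma cen_minus_fst a : fst (LIN a) - fst cen = fst (LIN (fun j => a j - / 2)).
Proof. unfold cen. apply lin_fst_minus. Qed.

Lemma H2_inst i : (i < 2 * n)%nat -> 0 < crd cen (Vv i) (Vv (S i)).
Proof. intros Hi. unfold cen. destruct (Nat.Even_or_Odd i) as [[b ->]|[b ->]].
  - assert (Hb : (b < n)%nat) by lia. rewrite Vv_even. replace (S (2 * b)) with (S (2*b)) by reflexivity.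
    rewrite Vv_odd, crd_lin.
    rewrite (LIN_ext (fun j => chi b (Lh + 1) j - / 2)
      (fun j => (chi b Lh j - / 2) + (if Nat.eqb j (addm b Lh) then 1 else 0))).
    2:{ intros j Hj. rewrite <- step1_diff by auto. ring. }
    fold LIN. rewrite lin_plus, lin_delta. 2:{ apply addm_lt; auto; pose proof Lh_par; lia. }
    rewrite cross_plus_self. unfold LIN. rewrite cross_lin_l. apply D1; auto.
  - assert (Hb : (b < n)%nat) by lia. replace (2 * b + 1)%nat with (S (2 * b)) by lia.
    rewrite Vv_odd. replace (S (S (2 * b))) with (2 * S b)%nat by lia. rewrite Vv_even, crd_lin.
    rewrite (LIN_ext (fun j => chi (S b) Lh j - / 2)
      (fun j => (chi b (Lh + 1) j - / 2) + - (if Nat.eqb j b then 1 else 0))).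
    2:{ intros j Hj. rewrite <- step2_diff by auto. ring. }
    fold LIN. rewrite lin_plus, lin_opp, lin_delta by auto.
    rewrite cross_plus_self, cross_opp_r. unfold LIN. rewrite cross_lin_l.
    rewrite <- Rsum_opp. eapply Rlt_le_trans; [apply (D2 b Hb)|].
    right. apply Rsum_ext. intros j Hj. unfold W. rewrite (cross_anti (w j)). ring. Qed.

Lemma H3_inst t i : (forall j, (j < n)%nat -> 0 <= t j <= 1) -> (i < 2 * n)%nat -> 0 <= crd (Vv i) (Vv (S i)) (LIN t).
Proof. intros Ht Hi. destruct (Nat.Even_or_Odd i) as [[b ->]|[b ->]].
  - assert (Hb : (b < n)%nat) by lia. rewrite Vv_even, Vv_odd, crd_lin.
    rewrite (LIN_ext (fun j => chi b (Lh + 1) j - chi b Lh j)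
      (fun j => (if Nat.eqb j (addm b Lh) then 1 else 0))).
    2:{ intros j Hj. rewrite step1_diff by auto. reflexivity. }
    fold LIN. rewrite lin_delta. 2:{ apply addm_lt; auto; pose proof Lh_par; lia. }
    unfold LIN. rewrite cross_lin_r. apply E1; auto.
  - assert (Hb : (b < n)%nat) by lia. replace (2 * b + 1)%nat with (S (2 * b)) by lia.
    rewrite Vv_odd. replace (S (S (2 * b))) with (2 * S b)%nat by lia. rewrite Vv_even, crd_lin.
    rewrite (LIN_ext (fun j => chi (S b) Lh j - chi b (Lh + 1) j)
      (fun j => - (if Nat.eqb j b then 1 else 0))).
    2:{ intros j Hj. rewrite step2_diff by auto. reflexivity. }
    fold LIN. rewrite lin_opp, lin_delta by auto. rewrite cross_opp_l.
    unfold LIN. rewrite cross_lin_r. rewrite <- Rsum_opp.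
    eapply Rle_trans; [apply (E2 b t Hb Ht)|].
    right. apply Rsum_ext. intros j Hj. unfold W. rewrite (cross_anti (w b)). ring. Qed.

Definition par := (n - 2 * Lh)%nat.

Lemma Vv_n : Vv n = LIN (chi Lh (Lh + par)).
Proof. unfold Vv, par. fold Lh. reflexivity. Qed.
Lemma Vv_0 : Vv 0 = LIN (chi 0 Lh).
Proof. unfold Vv. simpl. rewrite Nat.add_0_r. reflexivity. Qed.

Lemma antip j : (j < n)%nat -> chi Lh (Lh + par) j - / 2 = - (chi 0 Lh j - / 2).
Proof. intros Hj. pose proof Lh_par as HP. unfold chi, par, off.
  destruct (Nat.leb_spec 0 j); [|lia].
  destruct (Nat.leb_spec Lh j);
  match goal with |- context [Nat.ltb ?x (Lh + _)] => destruct (Nat.ltb_spec x (Lh + (n - 2*Lh))) end;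
  destruct (Nat.ltb_spec (j - 0) Lh); try lia; lra. Qed.

Lemma antip_fst : fst (Vv n) - fst cen = - (fst (Vv 0) - fst cen).
Proof. rewrite Vv_n, Vv_0. unfold cen. rewrite !lin_fst_minus.
  rewrite (LIN_ext _ (fun j => - (chi 0 Lh j - / 2))) by (intros; apply antip; auto).
  fold LIN. rewrite lin_opp. reflexivity. Qed.
Lemma antip_snd : snd (Vv n) - snd cen = - (snd (Vv 0) - snd cen).
Proof. rewrite Vv_n, Vv_0. unfold cen. rewrite !lin_snd_minus.
  rewrite (LIN_ext _ (fun j => - (chi 0 Lh j - / 2))) by (intros; apply antip; auto).
  fold LIN. rewrite lin_opp. reflexivity. Qed.

Lemma chi_n len j : (j < n)%nat -> chi n len j = chi 0 len j.
Proof. intros; unfold chi, off. destruct (Nat.leb_spec n j); [lia|]. destruct (Nat.leb_spec 0 j); [|lia].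
  replace (j + n - n)%nat with (j - 0)%nat by lia. reflexivity. Qed.

Lemma Vv_per : Vv (2 * n) = Vv 0.
Proof. rewrite Vv_even, Vv_0. apply lin_ext. intros; apply chi_n; auto. Qed.

Lemma zmod_off b k : (b < n)%nat -> (k < n)%nat ->
  ((Z.of_nat k - Z.of_nat (S b) + 1) mod Z.of_nat n)%Z = Z.of_nat (off b k).
Proof. intros Hb Hk. unfold off. destruct (Nat.leb_spec b k).
  - rewrite Z.mod_small by lia. lia.
  - replace (Z.of_nat k - Z.of_nat (S b) + 1)%Z with (Z.of_nat (k + n - b) + (-1) * Z.of_nat n)%Z by lia.
    rewrite Z_mod_plus_full. rewrite Z.mod_small by lia. reflexivity. Qed.

Lemma zleb_ltb o m : Z.leb (Z.of_nat o) (Z.of_nat m - 1) = Nat.ltb o m.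
Proof. destruct (Z.leb_spec (Z.of_nat o) (Z.of_nat m - 1)), (Nat.ltb_spec o m); lia. Qed.

Lemma inKlow_off b k : (b < n)%nat -> (k < n)%nat -> inKlow n (S b) k = Nat.ltb (off b k) Lh.
Proof. intros. unfold inKlow. rewrite zmod_off by auto.
  replace (Z.of_nat n / 2)%Z with (Z.of_nat Lh).
  - apply zleb_ltb.
  - pose proof Lh_par as HP. destruct HP as [HP|HP]; rewrite HP; rewrite ?Nat2Z.inj_add, ?Nat2Z.inj_mul;
    Z.div_mod_to_equations; lia. Qed.
Lemma inKup_off b k : (b < n)%nat -> (k < n)%nat -> inKup n (S b) k = Nat.ltb (off b k) (Lh + par).
Proof. intros. unfold inKup. rewrite zmod_off by auto.
  replace ((Z.of_nat n + 1) / 2)%Z with (Z.of_nat (Lh + par)).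
  - apply zleb_ltb.
  - unfold par. pose proof Lh_par as HP. destruct HP as [HP|HP]; rewrite HP;
    rewrite ?Nat2Z.inj_add, ?Nat2Z.inj_sub, ?Nat2Z.inj_mul by lia; Z.div_mod_to_equations; lia. Qed.

Lemma vodd_lin b : (b < n)%nat -> vodd n (qbase n p) (S b) = LIN (chi b Lh).
Proof. intros Hb. unfold vodd, LIN, lin. apply Csum_ext. intros k Hk.
  rewrite inKlow_off by auto. unfold chi, W, w. destruct (Nat.ltb _ _); apply C_ext; simpl; ring. Qed.
Lemma veven_lin b : (b < n)%nat -> veven n (qbase n p) (S b) = LIN (chi b (Lh + par)).
Proof. intros Hb. unfold veven, LIN, lin. apply Csum_ext. intros k Hk.
  rewrite inKup_off by auto. unfold chi, W, w. destruct (Nat.ltb _ _); apply C_ext; simpl; ring. Qed.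

Lemma VL_in b : (b <= n)%nat -> Vall n (qbase n p) (LIN (chi b Lh)).
Proof. intros Hb. destruct (Nat.eq_dec b n) as [->|Hne].
  - rewrite (LIN_ext (chi n Lh) (chi 0 Lh)) by (intros; apply chi_n; auto).
    exists 1%nat. split; [lia|]. left. rewrite vodd_lin by lia. reflexivity.
  - exists (S b). split; [lia|]. left. rewrite vodd_lin by lia. reflexivity. Qed.

Lemma Lth : n = (2 * Lh)%nat -> INR Lh * th = PI.
Proof. intros H. unfold th. rewrite H. rewrite mult_INR. simpl INR.
  field. assert (0 < INR Lh) by (apply lt_0_INR; pose proof Lh_ge1; lia). lra. Qed.

Lemma w_anti b : n = (2 * Lh)%nat -> (b < n)%nat ->
  W (addm b Lh) = Cmult (RtoC (- (p ^ (addm b Lh) / p ^ b))) (W b).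
Proof. intros HE Hb. pose proof (Lth HE) as HL. unfold W. rewrite !w_comp.
  assert (Hc : cos (INR (addm b Lh) * th) = - cos (INR b * th) /\ sin (INR (addm b Lh) * th) = - sin (INR b * th)).
  { unfold addm. destruct (Nat.ltb_spec (b + Lh) n).
    - rewrite plus_INR, Rmult_plus_distr_r, HL. rewrite neg_cos, neg_sin. auto.
    - rewrite minus_INR by lia. rewrite plus_INR.
      replace ((INR b + INR Lh - INR n) * th) with ((INR b * th + PI) + - (2 * INR 1 * PI)).
      2:{ rewrite Rmult_minus_distr_r, Rmult_plus_distr_r, HL, nth_eq. simpl INR. ring. }
      rewrite <- (cos_period _ 1), <- (sin_period _ 1).
      replace (INR b * th + PI + - (2 * INR 1 * PI) + 2 * INR 1 * PI) with (INR b * th + PI) by ring.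
      rewrite neg_cos, neg_sin. auto. }
  destruct Hc as [Hc Hs]. pose proof (ppos b).
  apply C_ext; simpl; rewrite ?Hc, ?Hs; field; lra. Qed.

Lemma mid_in_even b : n = (2 * Lh)%nat -> (b < n)%nat -> conv (Vall n (qbase n p)) (LIN (chi b (Lh + 1))).
Proof. intros HE Hb.
  set (k := addm b Lh). assert (Hk : (k < n)%nat) by (apply addm_lt; lia).
  assert (HZ : LIN (chi b (Lh + 1)) = Cplus (LIN (chi b Lh)) (W k)).
  { rewrite <- lin_delta by auto. rewrite <- lin_plus. apply LIN_ext. intros j Hj.
    pose proof (step1_diff b j Hb Hj) as HH. fold k in HH. lra. }
  assert (HY : LIN (chi (S b) Lh) = Cplus (LIN (chi b (Lh + 1))) (Copp (W b))).
  { rewrite <- lin_delta by auto. rewrite <- lin_opp, <- lin_plus. apply LIN_ext. intros j Hj.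
    pose proof (step2_diff b j Hb Hj) as HH. lra. }
  pose proof (w_anti b HE Hb) as HW. fold k in HW.
  set (mu := p ^ k / p ^ b) in HW.
  assert (Hmu : 0 < mu) by (unfold mu; apply Rdiv_lt_0_compat; apply ppos).
  apply conv_iff. exists ((/ (1 + mu), LIN (chi b Lh)) :: (mu / (1 + mu), LIN (chi (S b) Lh)) :: nil).
  split; [|split].
  - intros c [<-|[<-|[]]]; simpl; split.
    + left; apply Rinv_0_lt_compat; lra.
    + apply VL_in; lia.
    + left; apply Rdiv_lt_0_compat; lra.
    + apply VL_in; lia.
  - unfold wsum; simpl. field. lra.
  - assert (E1' : fst (LIN (chi (S b) Lh)) = fst (LIN (chi b Lh)) + fst (W k) - fst (W b)) by (rewrite HY, HZ; simpl; ring).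
    assert (E2' : snd (LIN (chi (S b) Lh)) = snd (LIN (chi b Lh)) + snd (W k) - snd (W b)) by (rewrite HY, HZ; simpl; ring).
    assert (E3 : fst (W k) = - mu * fst (W b)) by (rewrite HW; simpl; ring).
    assert (E4 : snd (W k) = - mu * snd (W b)) by (rewrite HW; simpl; ring).
    unfold comb; apply C_ext; simpl; rewrite ?E1', ?E2', HZ; simpl; rewrite ?E3, ?E4; field; lra. Qed.

Lemma Vv_in m : (m <= 2 * n)%nat -> conv (Vall n (qbase n p)) (Vv m).
Proof. intros Hm. destruct (Nat.Even_or_Odd m) as [[b ->]|[b ->]].
  - rewrite Vv_even. apply conv_of, VL_in. lia.
  - replace (2 * b + 1)%nat with (S (2 * b)) by lia. rewrite Vv_odd.
    destruct Lh_par as [HE|HO].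
    + apply mid_in_even; lia.
    + apply conv_of. exists (S b). split; [lia|]. right. rewrite veven_lin by lia.
      unfold par. replace (n - 2 * Lh)%nat with 1%nat by lia. reflexivity. Qed.

Lemma zono3 t : (forall j, (j < n)%nat -> 0 <= t j <= 1) -> conv (Vall n (qbase n p)) (LIN t).
Proof. intros Ht.
  destruct (polygon cen (LIN t) Vv n) as [i [a [b [Hi [Ha [Hb [Hab [Ef Es]]]]]]]].
  - lia.
  - apply H2_inst.
  - intros; apply H3_inst; auto.
  - apply antip_fst.
  - apply antip_snd.
  - apply Vv_per.
  - pose proof antip_fst as A1. pose proof antip_snd as A2.
    assert (Hc1 : fst cen = (fst (Vv 0) + fst (Vv n)) / 2) by lra.
    assert (Hc2 : snd cen = (snd (Vv 0) + snd (Vv n)) / 2) by lra.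
    set (e := (1 - a - b) / 2).
    replace (LIN t) with (comb ((e, Vv 0%nat) :: (e, Vv n) :: (a, Vv i) :: (b, Vv (S i)) :: nil)).
    + apply conv_conv.
      * intros c Hc. simpl in Hc.
        destruct Hc as [<-|[<-|[<-|[<-|[]]]]]; simpl; (split; [unfold e; lra | apply Vv_in; lia]).
      * unfold wsum, e; simpl. field.
    + unfold comb. apply C_ext; simpl; [rewrite Ef, Hc1 | rewrite Es, Hc2]; unfold e; field. Qed.
End Geo.

Lemma zono_small12 n p t : (1 <= n <= 2)%nat -> 1 < p -> (forall j, (j < n)%nat -> 0 <= t j <= 1) ->
  conv (Vall n (qbase n p)) (LIN n p t).
Proof. intros Hn Hp Ht. assert (n = 1%nat \/ n = 2%nat) as [->| ->] by lia.
  - assert (H0 := Ht 0%nat ltac:(lia)).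
    assert (E1 : vodd 1 (qbase 1 p) 1 = RtoC 0).
    { unfold vodd. replace (inKlow 1 1 0) with false by reflexivity. apply C_ext; simpl; ring. }
    assert (E2 : veven 1 (qbase 1 p) 1 = RtoC 1).
    { unfold veven. replace (inKup 1 1 0) with true by reflexivity. apply C_ext; simpl; ring. }
    apply conv_iff. exists ((1 - t 0%nat, vodd 1 (qbase 1 p) 1) :: (t 0%nat, veven 1 (qbase 1 p) 1) :: nil).
    split; [|split].
    + intros c [<-|[<-|[]]]; simpl; (split; [lra| exists 1%nat; split; [lia| auto]]).
    + unfold wsum; simpl; ring.
    + rewrite E1, E2. unfold LIN, lin, W, w, comb. apply C_ext; simpl; ring.
  - assert (H0 := Ht 0%nat ltac:(lia)). assert (H1 := Ht 1%nat ltac:(lia)).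
    assert (Hq : qbase 2 p = RtoC (- p)).
    { unfold qbase, Cexpi. replace (2 * PI / INR 2) with PI by (simpl; field).
      rewrite cos_PI, sin_PI. apply C_ext; simpl; ring. }
    assert (E1 : veven 2 (qbase 2 p) 1 = RtoC 1).
    { unfold veven. replace (inKup 2 1 0) with true by reflexivity.
      replace (inKup 2 1 1) with false by reflexivity. apply C_ext; simpl; ring. }
    assert (E2 : veven 2 (qbase 2 p) 2 = RtoC (- p)).
    { unfold veven. replace (inKup 2 2 0) with false by reflexivity.
      replace (inKup 2 2 1) with true by reflexivity. rewrite Hq. apply C_ext; simpl; ring. }
    set (al := (t 0%nat - p * t 1%nat + p) / (1 + p)).
    apply conv_iff. exists ((al, veven 2 (qbase 2 p) 1) :: (1 - al, veven 2 (qbase 2 p) 2) :: nil).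
    assert (0 <= al <= 1).
    { unfold al. split; [apply Rdiv_le_0_compat; nra|].
      apply (Rmult_le_reg_r (1 + p)); [lra|]. unfold Rdiv. rewrite Rmult_assoc, Rinv_l by lra. nra. }
    split; [|split].
    + intros c [<-|[<-|[]]]; simpl; split; try lra.
      * exists 1%nat; split; [lia|auto].
      * exists 2%nat; split; [lia|auto].
    + unfold wsum; simpl; ring.
    + rewrite E1, E2. unfold LIN, lin, W, w, comb. simpl Csum. rewrite Hq. apply C_ext; simpl; unfold al; field; lra.
Qed.

Lemma zono_all n p t : (1 <= n)%nat -> 1 < p -> (forall j, (j < n)%nat -> 0 <= t j <= 1) ->
  conv (Vall n (qbase n p)) (LIN n p t).
Proof. intros Hn Hp Ht. destruct (le_lt_dec n 2).
  - apply zono_small12; auto.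
  - apply zono3; auto; lia. Qed.

Section Ser.
Variable n : nat.
Variable p : R.
Hypothesis Hn : (1 <= n)%nat.
Hypothesis Hp : 1 < p.

Definition kof (s : nat) : nat := ((n - s mod n) mod n)%nat.

Lemma kof_lt s : (kof s < n)%nat.
Proof. unfold kof. apply Nat.mod_upper_bound. lia. Qed.

Lemma kof_div s : exists m, (s + kof s = n * m)%nat.
Proof. unfold kof. pose proof (Nat.div_mod_eq s n) as E. pose proof (Nat.mod_upper_bound s n ltac:(lia)) as B.
  set (R0 := (s mod n)%nat) in *. set (Q := (s / n)%nat) in *.
  destruct (Nat.eq_dec R0 0) as [H0|H0].
  - rewrite H0, Nat.sub_0_r, Nat.Div0.mod_same by lia. exists Q. lia.
  - rewrite Nat.mod_small by lia. exists (S Q). rewrite Nat.mul_succ_r. lia. Qed.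

Lemma kof_uniq s k m : (k < n)%nat -> (s + k = n * m)%nat -> k = kof s.
Proof. intros Hk Hm. destruct (kof_div s) as [m' Hm'].
  pose proof (kof_lt s).
  assert (m = m').
  { destruct (Nat.lt_trichotomy m m') as [Hl|[He|Hl]]; auto.
    - assert (n * S m <= n * m')%nat by (apply Nat.mul_le_mono_l; lia). rewrite Nat.mul_succ_r in H0. lia.
    - assert (n * S m' <= n * m)%nat by (apply Nat.mul_le_mono_l; lia). rewrite Nat.mul_succ_r in H0. lia. }
  subst. lia. Qed.

Definition ee (k j : nat) : R := if Nat.eqb k (kof (S j)) then / p ^ (S j + k) else 0.

Lemma ee_bound k j : 0 <= ee k j <= (/ p) ^ j.
Proof. unfold ee. pose proof (ppos p Hp j).
  assert (0 < (/p)^j) by (apply pow_lt; apply Rinv_0_lt_compat; lra).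
  destruct (Nat.eqb k (kof (S j))); [|lra]. split.
  - left; apply Rinv_0_lt_compat, ppos; auto.
  - rewrite pow_inv. apply Rinv_le_contravar; auto. apply Rle_pow; [lra|lia]. Qed.

Lemma geom_ex : ex_series (fun j => (/ p) ^ j).
Proof. apply ex_series_geom. rewrite Rabs_pos_eq; [|left; apply Rinv_0_lt_compat; lra].
  apply (Rmult_lt_reg_l p); [lra|]. rewrite Rinv_r; lra. Qed.

Lemma ex_series_xe (x : nat -> R) B k : (forall j, Rabs (x j) <= B) -> ex_series (fun j => x (S j) * ee k j).
Proof. intros HB. apply (ex_series_le (K:=R_AbsRing) (V:=R_CompleteNormedModule) _ (fun j => B * (/ p) ^ j)).
  - intros j. change (norm (x (S j) * ee k j)) with (Rabs (x (S j) * ee k j)).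
    rewrite Rabs_mult. pose proof (ee_bound k j). rewrite (Rabs_pos_eq (ee k j)) by lra.
    apply Rmult_le_compat; auto; try apply Rabs_pos; lra.
  - exact (ex_series_scal_l (V:=R_NormedModule) B _ geom_ex). Qed.

Lemma sum_f_R0_single (f : nat -> R) N j0 : (j0 <= N)%nat -> (forall j, (j <= N)%nat -> j <> j0 -> f j = 0) ->
  sum_f_R0 f N = f j0.
Proof. induction N; intros Hj H.
  - simpl. assert (j0 = 0%nat) by lia. subst; auto.
  - simpl. destruct (Nat.eq_dec j0 (S N)) as [->|Hne].
    + assert (sum_f_R0 f N = 0).
      { clear IHN. assert (forall M, (M <= N)%nat -> sum_f_R0 f M = 0).
        { induction M; intros HM; simpl; [apply H; lia|]. rewrite IHM by lia. rewrite (H (S M)) by lia. ring. }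
        auto. }
      lra.
    + rewrite IHN; [| lia | intros; apply H; lia]. rewrite (H (S N)) by lia. ring. Qed.

Lemma pn_gt1 : 1 < p ^ n.
Proof. apply Rlt_pow_R1; auto; lia. Qed.

Lemma Series_ee k : (k < n)%nat -> Series (ee k) = / (p ^ n - 1).
Proof. intros Hk. pose proof pn_gt1.
  assert (Hex : ex_series (ee k)).
  { apply (ex_series_le (K:=R_AbsRing) (V:=R_CompleteNormedModule) _ (fun j => (/ p) ^ j)); [|apply geom_ex].
    intros j. change (norm (ee k j)) with (Rabs (ee k j)). pose proof (ee_bound k j).
    rewrite Rabs_pos_eq; lra. }
  assert (HS : Series (ee k) = / p ^ n + / p ^ n * Series (ee k)).
  { rewrite (Series_incr_n _ n) at 1 by (auto; lia).
  rewrite (sum_f_R0_single _ _ (n - 1 - k)); [| lia |].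
  2:{ intros j Hj Hne. unfold ee. destruct (Nat.eqb_spec k (kof (S j))); auto.
      destruct (kof_div (S j)) as [m Hm]. rewrite <- e in Hm.
      exfalso. destruct m as [|[|m]]; [lia| lia |]. assert (n * S (S m) >= 2 * n)%nat by nia. lia. }
  assert (Hsh : forall j, ee k (n + j) = / p ^ n * ee k j).
  { intros j. unfold ee.
    assert (kof (S (n + j)) = kof (S j)).
    { destruct (kof_div (S j)) as [m Hm]. symmetry. apply (kof_uniq _ _ (S m)). apply kof_lt.
      rewrite Nat.mul_succ_r. lia. }
    rewrite H0. destruct (Nat.eqb k (kof (S j))); [|ring].
    replace (S (n + j) + k)%nat with (n + (S j + k))%nat by lia. rewrite pow_add, Rinv_mult. reflexivity. }
  rewrite (Series_ext _ _ Hsh), Series_scal_l.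
  assert (He0 : ee k (n - 1 - k) = / p ^ n).
  { unfold ee. replace (kof (S (n - 1 - k))) with k.
    - rewrite Nat.eqb_refl. f_equal. f_equal. lia.
    - apply (kof_uniq _ _ 1); auto. lia. }
  rewrite He0. reflexivity. }
  set (S0 := Series (ee k)) in *. set (P := p ^ n) in *.
  assert (P * S0 = 1 + S0) by (rewrite HS at 1; field; lra).
  apply (Rmult_eq_reg_l (P - 1)); [rewrite Rinv_r; lra | lra]. Qed.


Definition fterm (x : nat -> R) (j : nat) : C :=
  Cmult (RtoC (x (S j))) (Cinv (Cpow (qbase n p) (S j))).

Lemma trig_kof s : cos (INR s * th n) = cos (INR (kof s) * th n) /\ sin (INR s * th n) = - sin (INR (kof s) * th n).
Proof. destruct (kof_div s) as [m Hm].
  assert (E : INR s * th n = - (INR (kof s) * th n) + 2 * INR m * PI).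
  { assert (INR s + INR (kof s) = INR n * INR m) by (rewrite <- plus_INR, <- mult_INR; f_equal; auto).
    replace (2 * INR m * PI) with (INR m * (INR n * th n)) by (rewrite (nth_eq n Hn); ring).
    replace (INR s) with (INR n * INR m - INR (kof s)) by lra. ring. }
  rewrite E, cos_period, sin_period, cos_neg, sin_neg. auto. Qed.

Lemma fterm_decomp x j : fterm x j = Csum n (fun k => Cmult (RtoC (x (S j) * ee k j)) (w n p k)).
Proof. set (s := S j). set (k0 := kof s). pose proof (kof_lt s) as Hk0.
  destruct (trig_kof s) as [Hc Hs]. fold k0 in Hc, Hs.
  assert (Hsum : forall g : nat -> R, Rsum n (fun k => g k * (x s * ee k j)) = g k0 * (x s * / p ^ (s + k0))).
  { intros g. rewrite (Rsum_single _ _ k0 Hk0).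
    - unfold ee. fold s. fold k0. rewrite Nat.eqb_refl. reflexivity.
    - intros k Hk Hne. unfold ee. fold s. fold k0. apply Nat.eqb_neq in Hne. rewrite Hne. ring. }
  unfold fterm. fold s. change (Cpow (qbase n p) s) with (w n p s). rewrite (w_comp n p s).
  rewrite Hc, Hs.
  clearbody s.
  pose proof (ppos p Hp s) as Hps. pose proof (ppos p Hp k0) as Hpk.
  set (C0 := cos (INR k0 * th n)) in *. set (S0 := sin (INR k0 * th n)) in *.
  assert (T : S0 * S0 + C0 * C0 = 1).
  { pose proof (sin2_cos2 (INR k0 * th n)) as T. fold C0 S0 in T. unfold Rsqr in T. exact T. }
  assert (Hden : (p ^ s * C0) ^ 2 + (p ^ s * - S0) ^ 2 = (p ^ s) ^ 2).
  { replace ((p ^ s * C0) ^ 2 + (p ^ s * - S0) ^ 2) with ((p ^ s)^2 * (S0 * S0 + C0 * C0)) by ring.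
    rewrite T. ring. }
  assert (Hinv : Cinv (p ^ s * C0, p ^ s * - S0) = (C0 / p ^ s, S0 / p ^ s)).
  { unfold Cinv. cbn [fst snd]. rewrite Hden. apply C_ext; cbn [fst snd]; field; lra. }
  rewrite Hinv.
  assert (Hw0 : w n p k0 = (p ^ k0 * C0, p ^ k0 * S0)) by (rewrite w_comp; reflexivity).
  apply C_ext.
  - rewrite Csum_fst. rewrite (Rsum_ext _ _ (fun k => fst (w n p k) * (x s * ee k j))) by (intros; simpl; ring).
    rewrite Hsum. rewrite Hw0. cbn [fst snd Cmult RtoC]. rewrite pow_add. field. lra.
  - rewrite Csum_snd. rewrite (Rsum_ext _ _ (fun k => snd (w n p k) * (x s * ee k j))) by (intros; simpl; ring).
    rewrite Hsum. rewrite Hw0. cbn [fst snd Cmult RtoC]. rewrite pow_add. field. lra. Qed.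

Lemma sum_n_scal_r (a : nat -> R) (z : C) N :
  sum_n (G := C_R_NormedModule) (fun j => scal (a j) z) N = scal (sum_n a N) z.
Proof. induction N.
  - rewrite !sum_O. reflexivity.
  - rewrite !sum_Sn, IHN. exact (eq_sym (scal_distr_r _ _ _)). Qed.

Lemma is_series_RC (a : nat -> R) l (z : C) : is_series a l ->
  is_series (V := C_R_NormedModule) (fun j => Cmult (RtoC (a j)) z) (Cmult (RtoC l) z).
Proof. intros H.
  assert (E : forall r, Cmult (RtoC r) z = scal (V := C_R_NormedModule) r z) by (intros r; transitivity (r * fst z, r * snd z); [apply C_ext; simpl; ring | reflexivity]).
  rewrite E. apply (is_series_ext (fun j => scal (V := C_R_NormedModule) (a j) z)); [intros; rewrite E; reflexivity|].
  unfold is_series in *.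
  apply (filterlim_ext (fun N => scal (V := C_R_NormedModule) (sum_n a N) z)).
  { intros N. rewrite sum_n_scal_r. reflexivity. }
  apply (filterlim_comp nat R C (sum_n a) (fun r => scal (V := C_R_NormedModule) r z) eventually (locally l) (locally (scal (V := C_R_NormedModule) l z))); [exact H|]. apply (filterlim_scal_l (K:=R_AbsRing) (V:=C_R_NormedModule)). Qed.

Lemma is_series_C0 : is_series (V := C_R_NormedModule) (fun _ => RtoC 0) (RtoC 0).
Proof. unfold is_series. apply (filterlim_ext (fun _ => RtoC 0)).
  - intros N. induction N; [rewrite sum_O; reflexivity|]. rewrite sum_Sn, <- IHN. symmetry; transitivity (Cplus (RtoC 0) (RtoC 0)); [reflexivity | apply C_ext; simpl; ring].
  - apply filterlim_const. Qed.

Lemma is_series_Csum (F : nat -> nat -> C) (L : nat -> C) m :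
  (forall k, (k < m)%nat -> is_series (V := C_R_NormedModule) (F k) (L k)) ->
  is_series (V := C_R_NormedModule) (fun j => Csum m (fun k => F k j)) (Csum m L).
Proof. induction m; intros H.
  - simpl. apply is_series_C0.
  - simpl. apply (is_series_plus (V := C_R_NormedModule) (fun j => Csum m (fun k => F k j)) (F m)).
    + apply IHm; intros; apply H; lia.
    + apply H; lia. Qed.

Lemma is_series_C_unique (a : nat -> C) l1 l2 :
  is_series (V := C_R_NormedModule) a l1 -> is_series (V := C_R_NormedModule) a l2 -> l1 = l2.
Proof. unfold is_series. intros H1 H2.
  exact (filterlim_locally_unique (F := eventually) _ _ _ H1 H2). Qed.

Definition sig (x : nat -> R) (k : nat) : R := Series (fun j => x (S j) * ee k j).

Lemma Lam_series (x : nat -> R) B : (forall j, Rabs (x j) <= B) ->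
  is_series (V := C_R_NormedModule) (fterm x) (Csum n (fun k => Cmult (RtoC (sig x k)) (w n p k))).
Proof. intros HB. apply (is_series_ext (fun j => Csum n (fun k => Cmult (RtoC (x (S j) * ee k j)) (w n p k)))).
  { intros j; rewrite fterm_decomp; reflexivity. }
  apply is_series_Csum. intros k Hk. apply is_series_RC. unfold sig. apply Series_correct.
  apply (ex_series_xe x B); auto. Qed.

Lemma ex_ee k : ex_series (ee k).
Proof. apply (ex_series_le (K:=R_AbsRing) (V:=R_CompleteNormedModule) _ (fun j => (/ p) ^ j)); [|apply geom_ex].
  intros j. change (norm (ee k j)) with (Rabs (ee k j)). pose proof (ee_bound k j).
  rewrite Rabs_pos_eq; lra. Qed.

Lemma ex_scal_ee c k : ex_series (fun j => c * ee k j).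
Proof. exact (ex_series_scal_l (V:=R_NormedModule) c _ (ex_ee k)). Qed.

Lemma Series_zero : Series (fun _ => 0) = 0.
Proof. rewrite (Series_ext _ (fun j => 0 * ee 0 j)) by (intros; ring). rewrite Series_scal_l. ring. Qed.

Lemma sig_bounds (x : nat -> R) m M k : (k < n)%nat -> (forall j, m <= x j <= M) ->
  m * / (p ^ n - 1) <= sig x k <= M * / (p ^ n - 1).
Proof. intros Hk Hx. rewrite <- (Series_ee k Hk). unfold sig.
  assert (HB : forall j, Rabs (x j) <= Rmax (Rabs m) (Rabs M)).
  { intros j. destruct (Hx j). unfold Rabs, Rmax.
    repeat match goal with |- context [Rcase_abs ?a] => destruct (Rcase_abs a) end;
    repeat match goal with |- context [Rle_dec ?a ?b] => destruct (Rle_dec a b) end; lra. }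
  pose proof (ex_series_xe x _ k HB) as Ha.
  assert (E : Series (fun j => x (S j) * ee k j - m * ee k j) = Series (fun j => x (S j) * ee k j) - m * Series (ee k)).
  { rewrite Series_minus; auto. rewrite Series_scal_l. reflexivity. apply ex_scal_ee. }
  split.
  - assert (Series (fun _ => 0) <= Series (fun j => x (S j) * ee k j - m * ee k j)).
    { apply Series_le.
      - intros j. pose proof (ee_bound k j). destruct (Hx (S j)). split; [lra| nra].
      - exact (ex_series_minus (V:=R_NormedModule) _ _ Ha (ex_scal_ee m k)). }
    rewrite Series_zero, E in H. lra.
  - assert (Series (fun j => x (S j) * ee k j - m * ee k j) <= Series (fun j => (M - m) * ee k j)).
    { apply Series_le.
      - intros j. pose proof (ee_bound k j). destruct (Hx (S j)). split; nra.
      - apply ex_scal_ee. }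
    rewrite E, Series_scal_l in H. lra. Qed.

End Ser.

Lemma lmin_le A a : In a A -> lmin A <= a.
Proof. unfold lmin. generalize (hd 0 A). intros d. induction A as [|b A IH]; simpl; [tauto|].
  intros [->|H]; [apply Rmin_l|]. eapply Rle_trans; [apply Rmin_r| auto]. Qed.
Lemma lmax_ge A a : In a A -> a <= lmax A.
Proof. unfold lmax. generalize (hd 0 A). intros d. induction A as [|b A IH]; simpl; [tauto|].
  intros [->|H]; [apply Rmax_l|]. eapply Rle_trans; [apply IH; auto| apply Rmax_r]. Qed.
Lemma lmin_in A : A <> nil -> In (lmin A) A.
Proof. intros HA. unfold lmin.
  assert (G : forall d l, fold_right Rmin d l = d \/ In (fold_right Rmin d l) l).
  { intros d l. induction l as [|b l IH]; simpl; auto.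
    destruct (Rle_dec b (fold_right Rmin d l)) as [H|H].
    - rewrite Rmin_left by auto. auto.
    - rewrite Rmin_right by lra. destruct IH as [->|H']; auto. }
  destruct A as [|a A]; [congruence|]. destruct (G (hd 0 (a :: A)) (a :: A)) as [->|H]; simpl; auto. Qed.
Lemma lmax_in A : A <> nil -> In (lmax A) A.
Proof. intros HA. unfold lmax.
  assert (G : forall d l, fold_right Rmax d l = d \/ In (fold_right Rmax d l) l).
  { intros d l. induction l as [|b l IH]; simpl; auto.
    destruct (Rle_dec b (fold_right Rmax d l)) as [H|H].
    - rewrite Rmax_right by auto. destruct IH as [->|H']; auto.
    - rewrite Rmax_left by lra. auto. }
  destruct A as [|a A]; [congruence|]. destruct (G (hd 0 (a :: A)) (a :: A)) as [->|H]; simpl; auto. Qed.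

Lemma abs_le_max m M v : m <= v <= M -> Rabs v <= Rmax (Rabs m) (Rabs M).
Proof. intros [H1 H2]. unfold Rabs, Rmax.
  repeat match goal with |- context [Rcase_abs ?a] => destruct (Rcase_abs a) end;
  repeat match goal with |- context [Rle_dec ?a ?b] => destruct (Rle_dec a b) end; lra. Qed.

Lemma combo_eq n p (sg t : nat -> R) m G c :
  (forall k, (k < n)%nat -> sg k = m * G + c * t k) ->
  Csum n (fun k => Cmult (RtoC (sg k)) (w n p k)) =
  Cplus (Cmult (RtoC c) (LIN n p t)) (Cmult (RtoC G) (Csum n (fun k => Cmult (RtoC m) (Cpow (qbase n p) k)))).
Proof. intros H. unfold LIN. apply C_ext.
  - cbn [fst snd Cplus Cmult RtoC]. rewrite lin_fst, !Csum_fst, !Csum_snd, lin_snd.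
    rewrite (Rsum_ext n (fun k => fst (Cmult (RtoC (sg k)) (w n p k)))
       (fun k => G * (m * fst (w n p k)) + c * (t k * fst (W n p k)))).
    2:{ intros k Hk. rewrite H by auto. unfold W. simpl. ring. }
    rewrite (Rsum_ext n (fun k => fst (Cmult (RtoC m) (Cpow (qbase n p) k))) (fun k => m * fst (w n p k))) by (intros; unfold w; simpl; ring).
    rewrite (Rsum_ext n (fun k => snd (Cmult (RtoC m) (Cpow (qbase n p) k))) (fun k => m * snd (w n p k))) by (intros; unfold w; simpl; ring).
    rewrite Rsum_plus, !Rsum_scal. ring.
  - cbn [fst snd Cplus Cmult RtoC]. rewrite lin_fst, !Csum_fst, !Csum_snd, lin_snd.
    rewrite (Rsum_ext n (fun k => snd (Cmult (RtoC (sg k)) (w n p k)))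
       (fun k => G * (m * snd (w n p k)) + c * (t k * snd (W n p k)))).
    2:{ intros k Hk. rewrite H by auto. unfold W. simpl. ring. }
    rewrite (Rsum_ext n (fun k => fst (Cmult (RtoC m) (Cpow (qbase n p) k))) (fun k => m * fst (w n p k))) by (intros; unfold w; simpl; ring).
    rewrite (Rsum_ext n (fun k => snd (Cmult (RtoC m) (Cpow (qbase n p) k))) (fun k => m * snd (w n p k))) by (intros; unfold w; simpl; ring).
    rewrite Rsum_plus, !Rsum_scal. ring. Qed.

Lemma LamIn n p A y : (1 <= n)%nat -> 1 < p -> A <> nil -> Lambda n p A y ->
  exists z, conv (Vall n (qbase n p)) z /\
   y = Cplus (Cmult (RtoC ((lmax A - lmin A) / (p ^ n - 1))) z)
             (Cmult (RtoC (/ (p ^ n - 1))) (Csum n (fun k => Cmult (RtoC (lmin A)) (Cpow (qbase n p) k)))).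
Proof. intros Hn Hp HA [x [Hx Hs]].
  set (m := lmin A) in *. set (M := lmax A) in *.
  assert (Hb : forall j, m <= x j <= M) by (intros j; split; [apply lmin_le | apply lmax_ge]; auto).
  assert (HB : forall j, Rabs (x j) <= Rmax (Rabs m) (Rabs M)) by (intros; apply abs_le_max; auto).
  pose proof (Lam_series n p Hn Hp x _ HB) as HL.
  assert (Hy : y = Csum n (fun k => Cmult (RtoC (sig n p x k)) (w n p k))).
  { apply (is_series_C_unique _ _ _ Hs HL). }
  set (G := / (p ^ n - 1)).
  assert (HG : 0 < G) by (unfold G; apply Rinv_0_lt_compat; pose proof (pn_gt1 n p Hn Hp); lra).
  assert (HmM : m <= M) by (destruct (Hb 0%nat); lra).
  set (t := fun k => if Req_EM_T (M - m) 0 then 0 else (sig n p x k - m * G) / ((M - m) * G)).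
  assert (Ht : forall k, (k < n)%nat -> 0 <= t k <= 1 /\ sig n p x k = m * G + (M - m) * G * t k).
  { intros k Hk. pose proof (sig_bounds n p Hn Hp x m M k Hk Hb) as [S1 S2]. fold G in S1, S2.
    unfold t. destruct (Req_EM_T (M - m) 0) as [E|E].
    - split; [lra|]. assert (M = m) by lra. subst M. nra.
    - assert (0 < M - m) by lra. assert (0 < (M - m) * G) by nra. split; [split|].
      + apply Rdiv_le_0_compat; lra.
      + apply (Rmult_le_reg_r ((M - m) * G)); auto. unfold Rdiv. rewrite Rmult_assoc, Rinv_l by lra. nra.
      + field. split; lra. }
  exists (LIN n p t). split.
  - apply zono_all; auto. intros k Hk; apply Ht; auto.
  - rewrite Hy. apply combo_eq. intros k Hk. destruct (Ht k Hk) as [_ E]. rewrite E. unfold G, Rdiv. ring. Qed.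

Lemma VinLam n p A (chib : nat -> bool) : (1 <= n)%nat -> 1 < p -> A <> nil ->
  Lambda n p A (Cplus (Cmult (RtoC ((lmax A - lmin A) / (p ^ n - 1)))
                    (Csum n (fun k => if chib k then Cpow (qbase n p) k else RtoC 0)))
             (Cmult (RtoC (/ (p ^ n - 1))) (Csum n (fun k => Cmult (RtoC (lmin A)) (Cpow (qbase n p) k))))).
Proof. intros Hn Hp HA.
  set (m := lmin A). set (M := lmax A).
  set (x := fun s => if chib (kof n s) then M else m).
  exists x. split.
  - intros j. unfold x. destruct (chib _); [apply lmax_in | apply lmin_in]; auto.
  - assert (Hb : forall j, m <= x j <= M).
    { intros j. assert (m <= M). { pose proof (lmin_in A HA). unfold m, M. eapply Rle_trans; [apply lmin_le; eauto| apply lmax_ge; auto]. }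
      unfold x; destruct (chib _); lra. }
    assert (HB : forall j, Rabs (x j) <= Rmax (Rabs m) (Rabs M)) by (intros; apply abs_le_max; auto).
    pose proof (Lam_series n p Hn Hp x _ HB) as HL.
    replace (Cplus _ _) with (Csum n (fun k => Cmult (RtoC (sig n p x k)) (w n p k))); [exact HL|].
    transitivity (Cplus (Cmult (RtoC ((M - m) / (p ^ n - 1))) (LIN n p (fun k => if chib k then 1 else 0)))
      (Cmult (RtoC (/ (p ^ n - 1))) (Csum n (fun k => Cmult (RtoC m) (Cpow (qbase n p) k))))).
    + apply combo_eq. intros k Hk. unfold sig.
      rewrite (Series_ext _ (fun j => (if chib k then M else m) * ee n p k j)).
      * rewrite Series_scal_l, Series_ee by auto. destruct (chib k); unfold Rdiv; ring.
      * intros j. unfold ee. destruct (Nat.eqb_spec k (kof n (S j))) as [E|E]; [|ring].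
        unfold x. rewrite <- E. reflexivity.
    + f_equal. f_equal. unfold LIN, lin. apply Csum_ext. intros k Hk. unfold W, w.
      destruct (chib k); apply C_ext; simpl; ring. Qed.

Lemma comb_cons a x l : comb ((a, x) :: l) = Cplus (Cmult (RtoC a) x) (comb l).
Proof. reflexivity. Qed.
Lemma wsum_cons a x l : wsum ((a, x) :: l) = a + wsum l.
Proof. reflexivity. Qed.

Lemma map_lam (S T : C -> Prop) (c : R) (d : C) l :
  (forall y, S y -> exists z, T z /\ y = Cplus (Cmult (RtoC c) z) d) ->
  (forall e, In e l -> 0 <= fst e /\ S (snd e)) ->
  exists l', (forall e, In e l' -> 0 <= fst e /\ T (snd e)) /\ wsum l' = wsum l /\
    comb l = Cplus (Cmult (RtoC c) (comb l')) (Cmult (RtoC (wsum l)) d).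
Proof. intros HST. induction l as [|[a y] l IH]; intros H.
  - exists nil. split; [simpl; tauto|]. split; [reflexivity|]. unfold comb, wsum; simpl. apply C_ext; simpl; ring.
  - destruct IH as [l' [H1 [H2 H3]]]. { intros; apply H; simpl; auto. }
    destruct (H (a, y)) as [Ha Hy]; [simpl; auto|]. simpl in Ha, Hy.
    destruct (HST y Hy) as [z [Hz Ez]].
    exists ((a, z) :: l'). split; [|split].
    + intros e [<-|He]; simpl; auto.
    + rewrite !wsum_cons, H2. reflexivity.
    + rewrite !comb_cons, !wsum_cons, H3, Ez. apply C_ext; simpl; ring. Qed.

Lemma conv_ext (S T : C -> Prop) z : (forall x, S x -> T x) -> conv S z -> conv T z.
Proof. intros H [l [H1 H2]]. exists l. split; auto. intros c Hc. destruct (H1 c Hc); auto. Qed.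

Lemma vodd_even n q h : Nat.even n = true -> vodd n q h = veven n q h.
Proof. intros He. apply Nat.even_spec in He as [m Hm]. unfold vodd, veven.
  apply Csum_ext. intros k Hk. unfold inKlow, inKup.
  replace ((Z.of_nat n + 1) / 2)%Z with (Z.of_nat n / 2)%Z; [reflexivity|].
  rewrite Hm, Nat2Z.inj_mul. Z.div_mod_to_equations. lia. Qed.

Theorem theorem3p15 (n : nat) (p : R) (A : list R) :
  (1 <= n)%nat -> 1 < p -> A <> nil ->
  let q := qbase n p in
  let c := (lmax A - lmin A) / (p ^ n - 1) in
  let d := Cmult (RtoC (/ (p ^ n - 1)))
                 (Csum n (fun k => Cmult (RtoC (lmin A)) (Cpow q k))) in
  (forall z, conv (Lambda n p A) z <-> affimg c (conv (Vall n q)) d z) /\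
  (Nat.even n = true ->
   forall z, conv (Lambda n p A) z <-> affimg c (conv (Veven n q)) d z).
Proof.
  intros Hn Hp HA q c d.
  assert (Main : forall z, conv (Lambda n p A) z <-> affimg c (conv (Vall n q)) d z).
  { intros z. split.
    - intros [l [Hl [Hw Hz]]].
      destruct (map_lam (Lambda n p A) (conv (Vall n q)) c d l) as [l' [H1 [H2 H3]]]; auto.
      { intros y Hy. apply (LamIn n p A y Hn Hp HA Hy). }
      exists (comb l'). split.
      + apply conv_conv; auto. change (wsum l' = 1). rewrite H2. exact Hw.
      + change (z = comb l) in Hz. rewrite Hz, H3. change (wsum l = 1) in Hw. rewrite Hw.
        apply C_ext; simpl; ring.
    - intros [y [[l [Hl [Hw Hy]]] Hz]].
      set (l2 := map (fun e => (fst e, Cplus (Cmult (RtoC c) (snd e)) d)) l).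
      exists l2. split; [|split].
      + intros e He. unfold l2 in He. apply in_map_iff in He as [e' [<- He']]. simpl.
        destruct (Hl e' He') as [H0 [h [Hh [E|E]]]]; split; auto.
        * rewrite E. unfold vodd. apply VinLam; auto.
        * rewrite E. unfold veven. apply VinLam; auto.
      + change (wsum l2 = 1). change (wsum l = 1) in Hw. rewrite <- Hw. unfold l2, wsum.
        clear. induction l; simpl; auto. rewrite IHl. reflexivity.
      + change (z = comb l2). change (wsum l = 1) in Hw. change (y = comb l) in Hy.
        assert (E : comb l2 = Cplus (Cmult (RtoC c) (comb l)) (Cmult (RtoC (wsum l)) d)).
        { unfold l2. clear. induction l as [|[a v] l IH].
          - unfold comb, wsum; simpl. apply C_ext; simpl; ring.
          - simpl map. rewrite !comb_cons, wsum_cons, IH. apply C_ext; simpl; ring. }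
        rewrite E, Hw, Hz, Hy. apply C_ext; simpl; ring. }
  split; auto.
  intros He z. rewrite Main. unfold affimg. split; intros [y [Hy Hz]]; exists y; split; auto.
  - apply (conv_ext (Vall n q)); auto. intros x [h [Hh [E|E]]]; exists h; split; auto.
    rewrite E. apply vodd_even; auto.
  - apply (conv_ext (Veven n q)); auto. intros x [h [Hh E]]; exists h; split; auto.
Qed.
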